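(* Let $F=F(N,\mathcal D)$ be a connected GSC. Suppose there is $m\ge1$ and a partition $\mathcal D^m=I\cup J$ with $I\cap J=\varnothing$ such that $\big(\bigcup_{\mathbf i\in I}\varphi_{\mathbf i}(F)\big)\cap\big(\bigcup_{\mathbf i\in J}\varphi_{\mathbf i}(F)\big)=\{x\}$ for some $x\in F$. Then $F$ is fragile.
   Context: GSC: $N\ge2$, $\mathcal D\subset\{0,\dots,N-1\}^2$ with $1<|\mathcal D|<N^2$, $\varphi_i(x)=\frac1N(x+i)$, $F$ the attractor $F=\bigcup_{i\in\mathcal D}\varphi_i(F)$; $\varphi_{i_1\cdots i_m}=\varphi_{i_1}\circ\cdots\circ\varphi_{i_m}$. $F$ is fragile if there is a partition $\mathcal D=\mathcal D_1\cup\mathcal D_2$ into disjoint nonempty sets with $\big(\bigcup_{i\in\mathcal D_1}\varphi_i(F)\big)\cap\big(\bigcup_{i\in\mathcal D_2}\varphi_i(F)\big)$ a singleton. *)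

(* Defs.v *)
From HB Require Import structures.
From mathcomp Require Import all_boot all_order all_algebra.
From mathcomp Require Import all_classical all_reals all_analysis.
Unset Printing Implicit Defensive.
Import Order.TTheory GRing.Theory Num.Theory.
Import numFieldNormedType.Exports.
Local Open Scope classical_set_scope.
Local Open Scope ring_scope.

Definition digit (N : nat) := ('I_N * 'I_N)%type.

Definition phi {R : realType} (N : nat) (i : digit N) (x : R * R) : R * R :=
  ((x.1 + (i.1 : nat)%:R) / N%:R, (x.2 + (i.2 : nat)%:R) / N%:R).

Definition phiw {R : realType} (N : nat) (w : seq (digit N)) : R * R -> R * R :=
  foldr (fun i g => phi N i \o g) id w.

Definition is_attractor {R : realType} (N : nat) (D : {set digit N})
    (F : set (R * R)) : Prop :=
  [/\ compact F, F !=set0 &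
      F = \bigcup_(i in [set i | i \in D]) (phi N i @` F)].

Definition words (N : nat) (D : {set digit N}) (m : nat) : set (seq (digit N)) :=
  [set w | size w = m /\ all (fun i => i \in D) w].

Definition cell_union {R : realType} (N : nat) (A : set (seq (digit N)))
    (F : set (R * R)) : set (R * R) :=
  \bigcup_(w in A) (phiw N w @` F).

Definition fragile {R : realType} (N : nat) (D : {set digit N})
    (F : set (R * R)) : Prop :=
  exists D1 D2 : {set digit N},
    [/\ D1 :|: D2 = D, D1 :&: D2 = finset.set0, D1 != finset.set0, D2 != finset.set0 &
        exists x : R * R,
          (\bigcup_(i in [set i | i \in D1]) (phi N i @` F)) `&`
          (\bigcup_(i in [set i | i \in D2]) (phi N i @` F)) = [set x]].

(* Main.v *)
Require Import Defs.
From HB Require Import structures.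
From mathcomp Require Import all_boot all_order all_algebra.
From mathcomp Require Import all_classical all_reals all_analysis.
Import Order.TTheory GRing.Theory Num.Theory.
Import numFieldNormedType.Exports.
Local Open Scope classical_set_scope.

Local Open Scope ring_scope.
Lemma phi_cont (R : realType) N i : continuous (@phi R N i).
Proof.
move=> x; rewrite /phi.
have h1 : (fun y : R * R => (y.1 + (i.1 : nat)%:R) / N%:R)%R @ x --> ((x.1 + (i.1 : nat)%:R) / N%:R)%R.
  apply: cvgM; last exact: cvg_cst.
  apply: cvgD; last exact: cvg_cst.
  exact: cvg_fst.
have h2 : (fun y : R * R => (y.2 + (i.2 : nat)%:R) / N%:R)%R @ x --> ((x.2 + (i.2 : nat)%:R) / N%:R)%R.
  apply: cvgM; last exact: cvg_cst.
  apply: cvgD; last exact: cvg_cst.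
  exact: cvg_snd.
exact: (cvg_pair h1 h2).
Qed.

Lemma phiw_cons (R : realType) N i w (z : R * R) :
  phiw N (i :: w) z = phi N i (phiw N w z).
Proof. by []. Qed.

Lemma phiw_cont (R : realType) N w : continuous (@phiw R N w).
Proof.
elim: w => [|i w IH] x /=; first exact: cvg_id.
apply: continuous_comp; [exact: IH | exact: phi_cont].
Qed.

Lemma words_finite N D k : finite_set (words N D k).
Proof.
apply: (@sub_finite_set _ _ (val @` [set: k.-tuple (digit N)])).
  move=> w [sw _]; have H : size w == k by apply/eqP.
  by exists (Tuple H).
apply: finite_image; exact: finite_finset.
Qed.

Lemma cell_closed (R : realType) N D k (F : set (R * R)) A :
  compact F -> A `<=` words N D k -> closed (cell_union N A F).
Proof.
move=> cF AW; apply: closed_bigcup.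
  exact: sub_finite_set AW (words_finite N D k).
move=> w _; apply: compact_closed; first exact: norm_hausdorff.
apply: continuous_compact => //; apply: continuous_subspaceT.
exact: phiw_cont.
Qed.

Lemma Fsub (R : realType) N D (F : set (R * R)) i z :
  is_attractor N D F -> i \in D -> F z -> F (phi N i z).
Proof.
move=> [_ _ FE] iD Fz; rewrite FE; exists i => //; by exists z.
Qed.

Arguments Fsub {R N D F i z}.

Lemma phiwF (R : realType) N D (F : set (R * R)) w z :
  is_attractor N D F -> all (fun i => i \in D) w -> F z -> F (phiw N w z).
Proof.
move=> hA; elim: w => [|i w IH] // /andP [iD aw] Fz; rewrite phiw_cons.
exact: (Fsub hA iD (IH aw Fz)).
Qed.

Arguments phiwF {R N D F w z}.

Lemma cover (R : realType) N D (F : set (R * R)) k z :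
  is_attractor N D F -> F z ->
  exists w, words N D k w /\ exists2 z', F z' & z = phiw N w z'.
Proof.
move=> hA; elim: k z => [|k IH] z Fz.
  by exists [::]; split; [split|exists z].
have [_ _ FE] := hA.
move: Fz; rewrite {1}FE => -[i /= iD [z1 Fz1 <-]].
have [w [[sw aw] [z' Fz' ->]]] := IH z1 Fz1.
exists (i :: w); split; first by split; rewrite /= ?sw // iD aw.
by exists z'.
Qed.

Arguments cover {R N D F} k {z}.

Lemma words_cons N (D : {set digit N}) k w : words N D k.+1 w ->
  exists i u, [/\ w = i :: u, i \in D & words N D k u].
Proof.
case: w => [|i u] [//= su /andP [iD au]].
by exists i, u; split => //; split => //; case: su.
Qed.

Arguments words_cons {N D k w}.

Lemma words_consI N (D : {set digit N}) k i u : i \in D -> words N D k u -> words N D k.+1 (i :: u).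
Proof. by move=> iD [su au]; split; rewrite /= ?su // iD au. Qed.

Arguments words_consI {N D k i u}.

Lemma phi_inj (R : realType) N i (a b : R * R) : (2 <= N)%N ->
  phi N i a = phi N i b -> a = b.
Proof.
move=> hN E.
have hn : (N%:R : R)^-1 != 0%R.
  by rewrite invr_eq0 pnatr_eq0; apply/eqP => N0; rewrite N0 in hN.
have e1 : a.1 = b.1.
  have := congr1 fst E; rewrite /phi /= => /(mulIf hn) /addIr //.
have e2 : a.2 = b.2.
  have := congr1 snd E; rewrite /phi /= => /(mulIf hn) /addIr //.
by case: a b e1 e2 {E} => a1 a2 [b1 b2] /= -> ->.
Qed.

Lemma nosplit_case (R : realType) N D (F : set (R * R)) :
  is_attractor N D F ->
  forall k (I J : set (seq (digit N))) (x : R * R),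
    I `|` J = words N D k.+1 -> I `&` J = set0 ->
    cell_union N I F `&` cell_union N J F = [set x] ->
    ~ (exists i u v, [/\ i \in D, I (i :: u) & J (i :: v)]) ->
    fragile N D F.
Proof.
move=> hA k I J x hU hI hX nosplit.
have IW : I `<=` I `|` J by move=> w; left.
have JW : J `<=` I `|` J by move=> w; right.
rewrite hU in IW JW.
pose D1 := [set i in D | `[< exists u, I (i :: u) >]].
pose D2 := [set i in D | ~~ `[< exists u, I (i :: u) >]].
exists D1, D2.
have E1 : \bigcup_(i in [set i | i \in D1]) (phi N i @` F) = cell_union N I F.
  rewrite eqEsubset; split => y.
    move=> [i /=]; rewrite inE => /andP [iD /asboolP [u Iu]] [z Fz <-].
    have [w [W [z' Fz' ->]]] := cover k hA Fz.
    have : (I `|` J) (i :: w) by rewrite hU; exact: words_consI.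
    case => [Iw|Jw]; last by exfalso; apply: nosplit; exists i, u, w.
    by exists (i :: w) => //; exists z'.
  move=> [w Iw [z Fz <-]].
  have [i [u [Ew iD [_ au]]]] := words_cons (IW _ Iw).
  rewrite Ew in Iw *.
  exists i; first by rewrite /= inE iD; apply/asboolP; exists u.
  by exists (phiw N u z); [exact: (phiwF hA au Fz)|].
have E2 : \bigcup_(i in [set i | i \in D2]) (phi N i @` F) = cell_union N J F.
  rewrite eqEsubset; split => y.
    move=> [i /=]; rewrite inE => /andP [iD nI] [z Fz <-].
    have [w [W [z' Fz' ->]]] := cover k hA Fz.
    have : (I `|` J) (i :: w) by rewrite hU; exact: words_consI.
    case => [Iw|Jw]; first by exfalso; move/asboolPn: nI; apply; exists w.
    by exists (i :: w) => //; exists z'.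
  move=> [w Jw [z Fz <-]].
  have [i [u [Ew iD [_ au]]]] := words_cons (JW _ Jw).
  rewrite Ew in Jw *.
  exists i; last by exists (phiw N u z); [exact: (phiwF hA au Fz)|].
  rewrite /= inE iD /=; apply/asboolPn => -[u' Iu'].
  by apply: nosplit; exists i, u', u.
have hx : (cell_union N I F `&` cell_union N J F) x by rewrite hX.
have [[w Iw _] [v Jv _]] := hx.
have [i [u [Ew iD _]]] := words_cons (IW _ Iw).
have [j [u' [Ev jD _]]] := words_cons (JW _ Jv).
split.
- apply/setP => a; rewrite !inE; case: (a \in D) => //=.
  by case: (asbool _).
- apply/setP => a; rewrite !inE; case: (a \in D) => //=.
  by case: (asbool _).
- by apply/set0Pn; exists i; rewrite !inE iD /=; apply/asboolP; exists u; rewrite -Ew.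
- apply/set0Pn; exists j; rewrite !inE jD /=; apply/asboolPn => -[u'' Iu''].
  by apply: nosplit; exists j, u'', u'; rewrite -Ev.
- by exists x; rewrite E1 E2.
Qed.

Arguments nosplit_case {R N D F}.

Lemma main_ind (R : realType) N D (F : set (R * R)) :
  (2 <= N)%N -> is_attractor N D F -> connected F ->
  forall k (I J : set (seq (digit N))) (x : R * R),
    I `|` J = words N D k.+1 -> I `&` J = set0 ->
    cell_union N I F `&` cell_union N J F = [set x] ->
    fragile N D F.
Proof.
move=> hN hA hC k; elim: k => [|k IH] I J x hU hI hX.
all: have IW : I `<=` I `|` J by move=> w; left.
all: have JW : J `<=` I `|` J by move=> w; right.
all: rewrite hU in IW JW.
all: have [cF [z0 Fz0] FE] := hA.
all: case: (pselect (exists i u v, [/\ i \in D, I (i :: u) & J (i :: v)])) => [sp|ns];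
  last by exact: (nosplit_case hA _ _ _ _ hU hI hX ns).
- move: sp => [i [u [v [iD Iu Jv]]]].
  have [[su _] [sv _]] := (IW _ Iu, JW _ Jv).
  case: u su Iu => // _ Iu; case: v sv Jv => // _ Jv.
  by have : (I `&` J) [:: i] by []; rewrite hI.
- move: sp => [i [u [v [iD Iu Jv]]]].
  pose I' := [set w | I (i :: w)]; pose J' := [set w | J (i :: w)].
  have hU' : I' `|` J' = words N D k.+1.
    rewrite eqEsubset; split => w.
      by case=> [/IW|/JW] [/= [sw] /andP [_ aw]]; split.
    move=> W; have : (I `|` J) (i :: w) by rewrite hU; exact: words_consI.
    by case; [left|right].
  have hI' : I' `&` J' = set0.
    by rewrite -subset0 => w [a b]; have : (I `&` J) (i :: w) by []; rewrite hI.
  have sub1 : forall t, cell_union N I' F t -> cell_union N I F (phi N i t).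
    by move=> t [w Iw [z Fz <-]]; exists (i :: w) => //; exists z.
  have sub2 : forall t, cell_union N J' F t -> cell_union N J F (phi N i t).
    by move=> t [w Jw [z Fz <-]]; exists (i :: w) => //; exists z.
  have AF : cell_union N I' F `<=` F.
    move=> t [w /IW [_ /andP [_ au]] [z Fz <-]].
    exact: (phiwF hA au Fz).
  have BF : cell_union N J' F `<=` F.
    move=> t [w /JW [_ /andP [_ au]] [z Fz <-]].
    exact: (phiwF hA au Fz).
  have FAB : F `<=` cell_union N I' F `|` cell_union N J' F.
    move=> t Ft; have [w [W [z Fz ->]]] := cover k.+1 hA Ft.
    by move: W; rewrite -hU' => -[Iw|Jw]; [left|right]; exists w => //; exists z.
  case: (pselect (cell_union N I' F `&` cell_union N J' F !=set0)); last first.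
    move=> ne; exfalso.
    have cA : closed (cell_union N I' F).
      by apply: (@cell_closed R N D k.+1 F I' cF); rewrite -hU' => w h; left.
    have cB : closed (cell_union N J' F).
      by apply: (@cell_closed R N D k.+1 F J' cF); rewrite -hU' => w h; right.
    have Ane : cell_union N I' F !=set0.
      by exists (phiw N u z0); exists u => //; exists z0.
    have AeqF : cell_union N I' F = F.
      apply: hC => //.
      - exists (~` cell_union N J' F); first exact: closed_openC.
        rewrite eqEsubset; split => t.
          move=> At; split; first exact: AF.
          by move=> Bt; apply: ne; exists t.
        by move=> [Ft nB]; case: (FAB t Ft).
      - exists (cell_union N I' F) => //.
        by rewrite setIidr.
    apply: ne; exists (phiw N v z0); split; last by exists v => //; exists z0.
    by rewrite AeqF; apply: BF; exists v => //; exists z0.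
  move=> [y [Ay By]].
  apply: (IH I' J' y hU' hI').
  rewrite eqEsubset; split => t; last by move=> ->.
  move=> [At Bt]; apply: (@phi_inj R N i _ _ hN).
  have : [set x] (phi N i t) by rewrite -hX; split; [exact: sub1|exact: sub2].
  have : [set x] (phi N i y) by rewrite -hX; split; [exact: sub1|exact: sub2].
  by move=> /= -> ->.
Qed.


Local Close Scope ring_scope.
Theorem mainTheorem9 (R : realType) (N : nat) (D : {set digit N})
  (F : set (R * R)) :
  (2 <= N)%N -> (1 < #|D|)%N -> (#|D| < N ^ 2)%N ->
  is_attractor N D F -> connected F ->
  forall (m : nat), (1 <= m)%N ->
  forall (I J : set (seq (digit N))),
    I `|` J = words N D m -> I `&` J = set0 ->
  forall x : R * R, F x ->
    cell_union N I F `&` cell_union N J F = [set x] ->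
  fragile N D F.
Proof.
move=> hN _ _ hA hC [|k] // _ I J hU hI x _ hX.
exact: (@main_ind R N D F hN hA hC k I J x hU hI hX).
Qed.
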